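(* Let $\mathfrak g=\mathfrak{osp}(m|2n)\cong\mathfrak{spo}(2n|m)$ and let $\Phi$ be the composition of $\mathfrak g$-module morphisms $$\mathfrak g\wedge\mathfrak g\otimes\mathfrak g\hookrightarrow\mathfrak g\otimes\mathfrak g\otimes\mathfrak g\xrightarrow{\ \mathrm{id}\otimes\Pi_2\ }\mathfrak g\otimes(\mathfrak g\circledcirc_2\mathfrak g),$$ where $\Pi_2(X\otimes Y)=X\circledcirc_2Y$. Then $\dim\mathrm{Hom}_{\mathfrak g}(\mathfrak g,\ker\Phi)\ge1$.
   Context: Conventions: $\mathbb C^{m|2n}$ with parity $[a]=0$ for $a\le m$, else $1$; orthosymplectic metric $g_{ab}$ (invertible, even, $g_{ba}=(-1)^{[a][b]}g_{ab}$), $g^{ab}=g_{ab}$, raising/lowering by $V_a=\sum_bg_{ab}V^b$, $V^c=\sum_ag^{ac}V_a$; standing assumption $m>4$, $n>1$. $\mathfrak g$ = tensors $A^{ab}=-(-1)^{[a][b]}A^{ba}$; $\mathfrak g\otimes\mathfrak g$ = tensors $T^{abcd}$ super-antisymmetric in $(a,b)$ and $(c,d)$; $\mathfrak g\odot\mathfrak g$ (resp. $\mathfrak g\wedge\mathfrak g$) those with $T^{abcd}=\pm(-1)^{([a]+[b])([c]+[d])}T^{cdab}$ (sign $+$, resp. $-$). Let $s$ be the supersymmetrization $s(T)^{abcd}=\frac12(T^{abcd}+(-1)^{([a]+[b])([c]+[d])}T^{cdab})$ and $q(V)^{abcd}=\frac13(V^{abcd}+(-1)^{[a]([b]+[c])}V^{bcad}-(-1)^{[b][c]}V^{acbd})$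 on $\mathfrak g\odot\mathfrak g$; $q$ is a $\mathfrak g$-equivariant idempotent. The second Cartan product is $\mathfrak g\circledcirc_2\mathfrak g=\mathrm{Im}(q)$ (the irreducible module of highest weight $4\delta_1$ for the standard positive system, i.e. the Cartan product in $\mathfrak{spo}(2n|m)\otimes\mathfrak{spo}(2n|m)$), and $X\circledcirc_2Y:=q(s(X\otimes Y))$, the projection along $\ker q\oplus\mathfrak g\wedge\mathfrak g$. *)

(* Defs.v *)
From HB Require Import structures.
From mathcomp Require Import all_boot all_order all_algebra.
Set Implicit Arguments. Unset Strict Implicit. Unset Printing Implicit Defensive.
Import Order.TTheory GRing.Theory Num.Theory.
Local Open Scope ring_scope.

(* Indices of C^{m|2n}: 'I_(m + 2n); parity [a] = 0 for a < m (i.e. a <= m in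
   1-based numbering), 1 otherwise. *)
Definition idx (m n : nat) := 'I_(m + 2 * n).
Definition par {m n : nat} (a : idx m n) : nat := (m <= a)%N.

(* k-tensors T^{c_1 ... c_k} (all indices upstairs) = elements of V^{(x)k}. *)
Notation tensor C m n k := {ffun k.-tuple (idx m n) -> (GRing.Field.sort C)^o}.

Section Tensors.
Variables (C : numClosedFieldType) (m n : nat).
Local Notation I := (idx m n).
Local Notation tensor k := (tensor C m n k).

Definition sgn (e : nat) : C := (-1) ^+ e.

Definition tsubst k (c : k.-tuple I) (i : 'I_k) (d : I) : k.-tuple I :=
  [tuple (if j == i then d else tnth c j) | j < k].

(* The natural (super) action of X in gl(m|2n) (matrix X, X e_d = sum_c X_cd e_c)
   on V^{(x)k}, extended graded-linearly:
   (X.T)^{c_1..c_k} = sum_i sum_d (-1)^{([c_i]+[d])([c_1]+..+[c_{i-1}])}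
                        X^{c_i}_d T^{c_1..d..c_k}. *)
Definition act k (X : 'M[C]_(m + 2 * n)) (T : tensor k) : tensor k :=
  [ffun c => \sum_(i < k) \sum_(d : I)
      sgn ((par (tnth c i) + par d) * \sum_(j < k | (j < i)%N) par (tnth c j))
      * X (tnth c i) d * T (tsubst c i d)].

(* orthosymplectic metric: even, g_ba = (-1)^{[a][b]} g_ab, and g^{ab} = g_ab is
   its inverse in the sense sum_a g_ac g_ab = delta_cb *)
Definition ortho_metric (g : 'M[C]_(m + 2 * n)) : Prop :=
  [/\ forall a b : I, par a != par b -> g a b = 0,
      forall a b : I, g b a = sgn (par a * par b) * g a b
    & g^T *m g = 1%:M].

Definition metric_tensor (g : 'M[C]_(m + 2 * n)) : tensor 2 :=
  [ffun c => g (tnth c 0) (tnth c 1)].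

Definition in_osp (g X : 'M[C]_(m + 2 * n)) : Prop :=
  act X (metric_tensor g) = 0.

Definition t2 (a b : I) : 2.-tuple I := [tuple a; b].
Definition t4 (a b c d : I) : 4.-tuple I := [tuple a; b; c; d].
Definition t6 (a b c d e f : I) : 6.-tuple I := [tuple a; b; c; d; e; f].

(* g = super-antisymmetric 2-tensors *)
Definition in_g (A : tensor 2) : Prop :=
  forall a b, A (t2 a b) = - sgn (par a * par b) * A (t2 b a).

Definition in_wedge_g_tensor_g (T : tensor 6) : Prop :=
  [/\ forall a b c d e f, T (t6 a b c d e f) = - sgn (par a * par b) * T (t6 b a c d e f),
      forall a b c d e f, T (t6 a b c d e f) = - sgn (par c * par d) * T (t6 a b d c e f),
      forall a b c d e f, T (t6 a b c d e f) = - sgn (par e * par f) * T (t6 a b c d f e)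
    & forall a b c d e f, T (t6 a b c d e f) =
        - sgn ((par a + par b) * (par c + par d)) * T (t6 c d a b e f)].

Definition s_op (V : I -> I -> I -> I -> C) : I -> I -> I -> I -> C :=
  fun a b c d => 2%:R^-1 * (V a b c d + sgn ((par a + par b) * (par c + par d)) * V c d a b).
Definition q_op (V : I -> I -> I -> I -> C) : I -> I -> I -> I -> C :=
  fun a b c d => 3%:R^-1 * (V a b c d + sgn (par a * (par b + par c)) * V b c a d
                             - sgn (par b * par c) * V a c b d).

(* Pi_2 (X (x) Y) = X circledcirc_2 Y = q (s (X (x) Y)), extended linearly to g (x) g *)
Definition Pi2 (T : tensor 4) : tensor 4 :=
  [ffun c => q_op (s_op (fun a b c d => T (t4 a b c d)))
                  (tnth c 0) (tnth c 1) (tnth c 2) (tnth c 3)].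

(* Phi = (id (x) Pi_2) restricted to g /\ g (x) g; Pi_2 is even, so it acts
   componentwise on the last four indices *)
Definition Phi (T : tensor 6) : tensor 6 :=
  [ffun c => q_op (s_op (fun a b d e => T (t6 (tnth c 0) (tnth c 1) a b d e)))
                  (tnth c 2) (tnth c 3) (tnth c 4) (tnth c 5)].

Definition in_ker_Phi (T : tensor 6) : Prop := in_wedge_g_tensor_g T /\ Phi T = 0.

Definition tensor_of_parity k (p : nat) (T : tensor k) : Prop :=
  forall c, T c != 0 -> odd (\sum_(j < k) par (tnth c j)) = odd p.

Definition is_g_hom_into_ker_Phi (g : 'M[C]_(m + 2 * n))
    (f : {linear tensor 2 -> tensor 6}) : Prop :=
  [/\ forall A, in_g A -> in_ker_Phi (f A),
      forall A p, in_g A -> tensor_of_parity p A -> tensor_of_parity p (f A)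
    & forall X A, in_osp g X -> in_g A -> f (act X A) = act X (f A)].

End Tensors.

(* Main.v *)
Require Import Defs.
From HB Require Import structures.
From mathcomp Require Import all_boot all_order all_algebra ring zify.
From mathcomp Require Import fingroup perm.
Set Implicit Arguments. Unset Strict Implicit. Unset Printing Implicit Defensive.
Import Order.TTheory GRing.Theory Num.Theory.
Local Open Scope ring_scope.

Ltac bcase := repeat match goal with |- context [odd (par ?x)] => case: (odd (par x)) end.

Section S.
Variables (C : numClosedFieldType) (m n : nat).
Local Notation I := (idx m n).
Local Notation tensor k := (tensor C m n k).
Local Notation sgn := (sgn C).

Lemma sgnE e : sgn e = (-1) ^+ (odd e).
Proof. by rewrite /sgn signr_odd. Qed.

Lemma sgn_odd e1 e2 : odd e1 = odd e2 -> sgn e1 = sgn e2.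
Proof. by rewrite !sgnE => ->. Qed.

Lemma sgnD a b : sgn (a + b) = sgn a * sgn b.
Proof. by rewrite /sgn exprD. Qed.

Definition ptup k (s : {perm 'I_k}) (c : k.-tuple I) : k.-tuple I :=
  [tuple tnth c (s j) | j < k].
Definition Mz k (s : {perm 'I_k}) (i j : 'I_k) : nat := ((i < j)%N && (s j < s i)%N).
Definition kz k (s : {perm 'I_k}) (c : k.-tuple I) : nat :=
  \sum_(i < k) \sum_(j < k) Mz s i j * (par (tnth c (s i)) * par (tnth c (s j))).
Definition pact k (s : {perm 'I_k}) (T : tensor k) : tensor k :=
  [ffun c => sgn (kz s c) * T (ptup s c)].

Lemma sum_even k (F : 'I_k -> nat) : (forall j, ~~ odd (F j)) -> ~~ odd (\sum_j F j).
Proof.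
move=> H; apply: (big_ind (fun x => ~~ odd x)) => // a b.
by rewrite oddD; case: (odd a); case: (odd b).
Qed.

Lemma quad_dec k (M : 'I_k -> 'I_k -> nat) (y : 'I_k -> nat) i0 :
  M i0 i0 = 0%N ->
  (\sum_i \sum_j M i j * (y i * y j) =
   \sum_(i | i != i0) \sum_(j | j != i0) M i j * (y i * y j)
   + y i0 * \sum_j (M i0 j + M j i0) * y j)%N.
Proof.
move=> M0.
rewrite (bigD1 i0) //=.
have E : (\sum_(i | i != i0) \sum_j M i j * (y i * y j) =
   \sum_(i | i != i0) \sum_(j | j != i0) M i j * (y i * y j)
   + \sum_(i | i != i0) M i i0 * (y i * y i0))%N.
  rewrite -big_split /=; apply: eq_bigr => i _.
  by rewrite (bigD1 i0) //= addnC.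
rewrite E.
have E2 : (y i0 * \sum_j (M i0 j + M j i0) * y j =
   \sum_j M i0 j * (y i0 * y j) + \sum_(i | i != i0) M i i0 * (y i * y i0))%N.
  rewrite big_distrr /=.
  rewrite (eq_bigr (fun j => M i0 j * (y i0 * y j) + M j i0 * (y j * y i0))%N); last first.
    by move=> j _; ring.
  rewrite big_split /=; congr (_ + _)%N.
  by rewrite (bigD1 i0) //= M0 mul0n add0n.
rewrite E2 addnCA addnA //.
Qed.

Lemma tnth_ptup k (s : {perm 'I_k}) (c : k.-tuple I) j : tnth (ptup s c) j = tnth c (s j).
Proof. by rewrite tnth_mktuple. Qed.

Lemma ptup_tsubst k (s : {perm 'I_k}) (c : k.-tuple I) i (d : I) :
  ptup s (tsubst c (s i) d) = tsubst (ptup s c) i d.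
Proof.
apply: eq_from_tnth => j; rewrite !tnth_mktuple (inj_eq (@perm_inj _ s)).
by case: (j == i) => //; rewrite tnth_mktuple.
Qed.

Lemma par_tsubst k (s : {perm 'I_k}) (c : k.-tuple I) i (d : I) j :
  par (tnth (tsubst c (s i) d) (s j)) = if j == i then par d else par (tnth c (s j)).
Proof. by rewrite tnth_mktuple (inj_eq (@perm_inj _ s)); case: (j == i). Qed.

Lemma nb_if (b : bool) (v : nat) : (if b then v else 0)%N = (b * v)%N.
Proof. by case: b; rewrite ?mul1n ?mul0n. Qed.

Lemma coef_nat (a b x y : nat) : a != b -> x != y ->
  ~~ odd ((x < y)%N + (((b < a)%N && (x < y)%N) + ((a < b)%N && (y < x)%N)) + (a < b)%N).
Proof. by case: (ltngtP a b); case: (ltngtP x y). Qed.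

Lemma coef_even k (s : {perm 'I_k}) i j :
  ~~ odd ((s j < s i)%N + (Mz s i j + Mz s j i) + (j < i)%N).
Proof.
rewrite /Mz; case: (eqVneq j i) => [->|ne]; first by rewrite !ltnn.
have ne' : s j != s i by rewrite (inj_eq (@perm_inj _ s)).
exact: coef_nat.
Qed.

Lemma sign_key k (s : {perm 'I_k}) (c : k.-tuple I) i (d : I) :
  sgn ((par (tnth c (s i)) + par d) * \sum_(j < k | (j < s i)%N) par (tnth c j))
  * sgn (kz s (tsubst c (s i) d))
  = sgn (kz s c) * sgn ((par (tnth c (s i)) + par d) * \sum_(j < k | (j < i)%N) par (tnth (ptup s c) j)).
Proof.
rewrite -!sgnD; apply: sgn_odd.
set y := fun j => par (tnth c (s j)).
set y2 := fun j => par (tnth (tsubst c (s i) d) (s j)).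
have M0 : Mz s i i = 0%N by rewrite /Mz ltnn.
have K1 : kz s c = (\sum_(a | a != i) \sum_(b | b != i) Mz s a b * (y a * y b)
   + y i * \sum_j (Mz s i j + Mz s j i) * y j)%N by rewrite /kz (@quad_dec k (Mz s) y i M0).
have K2 : kz s (tsubst c (s i) d) = (\sum_(a | a != i) \sum_(b | b != i) Mz s a b * (y a * y b)
   + par d * \sum_j (Mz s i j + Mz s j i) * y j)%N.
  rewrite /kz (@quad_dec k (Mz s) y2 i M0).
  have -> : y2 i = par d by rewrite /y2 par_tsubst eqxx.
  congr (_ + _ * _)%N.
    apply: eq_bigr => a ha; apply: eq_bigr => b hb.
    by rewrite /y2 !par_tsubst (negbTE ha) (negbTE hb).
  apply: eq_bigr => j _; rewrite /y2 par_tsubst.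
  by case: eqP => [->|//]; rewrite M0.
have P1 : (\sum_(j < k | (j < s i)%N) par (tnth c j) = \sum_j (s j < s i)%N * y j)%N.
  rewrite big_mkcond /= (reindex_inj (@perm_inj _ s)) /=.
  by apply: eq_bigr => j _; rewrite nb_if.
have P2 : (\sum_(j < k | (j < i)%N) par (tnth (ptup s c) j) = \sum_(j < k) (j < i)%N * y j)%N.
  rewrite big_mkcond /=.
  by apply: eq_bigr => j _; rewrite nb_if tnth_ptup.
rewrite K1 K2 P1 P2.
set Q0 := (\sum_(a | a != i) _)%N.
set R := (\sum_j (Mz s i j + Mz s j i) * y j)%N.
set S1 := (\sum_j (s j < s i)%N * y j)%N.
set S2 := (\sum_(j < k) (j < i)%N * y j)%N.
have Ev : ~~ odd (S1 + R + S2).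
  rewrite /S1 /R /S2 -!big_split /=; apply: sum_even => j.
  by rewrite -!mulnDl oddM negb_and coef_even.
move: Ev; rewrite !oddD !oddM !oddD -/(y i).
case: (odd S1); case: (odd R); case: (odd S2); case: (odd Q0);
  case: (odd (y i)); case: (odd (par d)) => //.
Qed.

Lemma aux4 (a b u v x y : C) : a * b = u * v -> a * x * (b * y) = u * (v * x * y).
Proof. move=> H; transitivity ((a * b) * (x * y)); first by ring. by rewrite H; ring. Qed.

Lemma act_pact k (X : 'M[C]_(m + 2 * n)) (s : {perm 'I_k}) (T : tensor k) :
  act X (pact s T) = pact s (act X T).
Proof.
apply/ffunP => c; rewrite !ffunE big_distrr /=.
rewrite (reindex_inj (@perm_inj _ s)) /=.
apply: eq_bigr => i _; rewrite big_distrr /=; apply: eq_bigr => d _.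
rewrite !ffunE ptup_tsubst tnth_ptup.
have H := sign_key s c i d.
set s1 := sgn (_ * \sum_(j < k | (j < s i)%N) _).
set s2 := sgn (kz s (tsubst c (s i) d)).
set s3 := sgn (kz s c).
set s4 := sgn (_ * \sum_(j < k | (j < i)%N) _).
exact: (aux4 _ _ H).
Qed.

Lemma tuple6E (c : 6.-tuple I) :
  c = t6 (tnth c 0) (tnth c 1) (tnth c 2) (tnth c 3) (tnth c 4) (tnth c 5).
Proof.
apply: eq_from_tnth => i.
case: i => [[|[|[|[|[|[|//]]]]]] Hi]; rewrite [RHS]/tnth /=; congr tnth; exact: val_inj.
Qed.
Lemma tuple2E (c : 2.-tuple I) : c = t2 (tnth c 0) (tnth c 1).
Proof.
apply: eq_from_tnth => i.
case: i => [[|[|//]] Hi]; rewrite [RHS]/tnth /=; congr tnth; exact: val_inj.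
Qed.
Definition U (g : 'M[C]_(m + 2 * n)) (A : tensor 2) : tensor 6 :=
  [ffun c => g (tnth c 0) (tnth c 1) * g (tnth c 2) (tnth c 3) * A (t2 (tnth c 4) (tnth c 5))].
Lemma tsub6_0 (a b c d e f x : I) : tsubst (t6 a b c d e f) 0 x = t6 x b c d e f.
Proof. apply: eq_from_tnth => i; rewrite tnth_mktuple; by case: i => [[|[|[|[|[|[|//]]]]]] Hi]. Qed.
Lemma tsub6_1 (a b c d e f x : I) : tsubst (t6 a b c d e f) 1 x = t6 a x c d e f.
Proof. apply: eq_from_tnth => i; rewrite tnth_mktuple; by case: i => [[|[|[|[|[|[|//]]]]]] Hi]. Qed.
Lemma tsub6_2 (a b c d e f x : I) : tsubst (t6 a b c d e f) 2 x = t6 a b x d e f.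
Proof. apply: eq_from_tnth => i; rewrite tnth_mktuple; by case: i => [[|[|[|[|[|[|//]]]]]] Hi]. Qed.
Lemma tsub6_3 (a b c d e f x : I) : tsubst (t6 a b c d e f) 3 x = t6 a b c x e f.
Proof. apply: eq_from_tnth => i; rewrite tnth_mktuple; by case: i => [[|[|[|[|[|[|//]]]]]] Hi]. Qed.
Lemma tsub6_4 (a b c d e f x : I) : tsubst (t6 a b c d e f) 4 x = t6 a b c d x f.
Proof. apply: eq_from_tnth => i; rewrite tnth_mktuple; by case: i => [[|[|[|[|[|[|//]]]]]] Hi]. Qed.
Lemma tsub6_5 (a b c d e f x : I) : tsubst (t6 a b c d e f) 5 x = t6 a b c d e x.
Proof. apply: eq_from_tnth => i; rewrite tnth_mktuple; by case: i => [[|[|[|[|[|[|//]]]]]] Hi]. Qed.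

Lemma act6E (X : 'M[C]_(m + 2 * n)) (T : tensor 6) (a b c d e f : I) :
  act X T (t6 a b c d e f) =
    \sum_x sgn ((par a + par x) * 0) * X a x * T (t6 x b c d e f)
  + (\sum_x sgn ((par b + par x) * par a) * X b x * T (t6 a x c d e f)
  + (\sum_x sgn ((par c + par x) * (par a + par b)) * X c x * T (t6 a b x d e f)
  + (\sum_x sgn ((par d + par x) * (par a + par b + par c)) * X d x * T (t6 a b c x e f)
  + (\sum_x sgn ((par e + par x) * (par a + par b + par c + par d)) * X e x * T (t6 a b c d x f)
  + \sum_x sgn ((par f + par x) * (par a + par b + par c + par d + par e)) * X f x * T (t6 a b c d e x))))).
Proof.
rewrite ffunE !big_ord_recl big_ord0 addr0.
congr (_ + (_ + (_ + (_ + (_ + _))))); apply: eq_bigr => x _.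
all: congr (sgn _ * _ * T _); last (apply: eq_from_tnth => i; rewrite tnth_mktuple; by case: i => [[|[|[|[|[|[|//]]]]]] Hi]).
all: rewrite big_mkcond !big_ord_recl big_ord0 /= /tnth /=; ring.
Qed.

Lemma act2E (X : 'M[C]_(m + 2 * n)) (T : tensor 2) (a b : I) :
  act X T (t2 a b) =
    \sum_x sgn ((par a + par x) * 0) * X a x * T (t2 x b)
  + \sum_x sgn ((par b + par x) * par a) * X b x * T (t2 a x).
Proof.
rewrite ffunE !big_ord_recl big_ord0 addr0.
congr (_ + _); apply: eq_bigr => x _.
all: congr (sgn _ * _ * T _); last (apply: eq_from_tnth => i; rewrite tnth_mktuple; by case: i => [[|[|//]] Hi]).
all: rewrite big_mkcond !big_ord_recl big_ord0 /= /tnth /=; ring.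
Qed.

Lemma UE g A (a b c d e f : I) : U g A (t6 a b c d e f) = g a b * g c d * A (t2 e f).
Proof. by rewrite ffunE. Qed.

Lemma sgn0 e : sgn (e * 0) = 1.
Proof. by rewrite muln0 /sgn expr0. Qed.

Lemma act_U (g X : 'M[C]_(m + 2 * n)) (A : tensor 2) :
  (forall a b : I, par a != par b -> g a b = 0) -> in_osp g X ->
  act X (U g A) = U g (act X A).
Proof.
move=> hz hosp.
have O : forall x y : I, \sum_(z : I) sgn ((par x + par z) * 0) * X x z * g z y
  + \sum_(z : I) sgn ((par y + par z) * par x) * X y z * g x z = 0.
  move=> x y; have H0 : act X (metric_tensor g) = 0 := hosp; have := congr1 (fun T : tensor 2 => T (t2 x y)) H0; rewrite /= act2E ffunE.
  move=> H; rewrite -[RHS]H; congr (_ + _); apply: eq_bigr => z _; by rewrite ffunE.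
have gp : forall x y : I, g x y != 0 -> par x = par y.
  by move=> x y; apply: contraNeq => /hz ->.
apply/ffunP => t; rewrite (tuple6E t).
move: (tnth t 0) (tnth t 1) (tnth t 2) (tnth t 3) (tnth t 4) (tnth t 5) => a b c d e f.
rewrite act6E !UE act2E.
set K := g a b * g c d.
have G01 : \sum_x sgn ((par a + par x) * 0) * X a x * U g A (t6 x b c d e f) +
  \sum_x sgn ((par b + par x) * par a) * X b x * U g A (t6 a x c d e f) = 0.
  transitivity ((\sum_(z : I) sgn ((par a + par z) * 0) * X a z * g z b
    + \sum_(z : I) sgn ((par b + par z) * par a) * X b z * g a z) * (g c d * A (t2 e f))); last by rewrite O mul0r.
  rewrite mulrDl !big_distrl /=.
  by congr (_ + _); apply: eq_bigr => x _; rewrite UE; ring.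
have G23 : \sum_x sgn ((par c + par x) * (par a + par b)) * X c x * U g A (t6 a b x d e f) +
  \sum_x sgn ((par d + par x) * (par a + par b + par c)) * X d x * U g A (t6 a b c x e f) = 0.
  case: (eqVneq (g a b) 0) => [gz|/gp hab].
    by rewrite !big1 ?addr0 // => x _; rewrite UE gz !(mul0r, mulr0).
  transitivity ((\sum_(z : I) sgn ((par c + par z) * 0) * X c z * g z d
    + \sum_(z : I) sgn ((par d + par z) * par c) * X d z * g c z) * (g a b * A (t2 e f))); last by rewrite O mul0r.
  rewrite mulrDl !big_distrl /=.
  congr (_ + _); apply: eq_bigr => x _; rewrite UE.
  - have -> : sgn ((par c + par x) * (par a + par b)) = sgn ((par c + par x) * 0).
      by apply: sgn_odd; rewrite !oddM !oddD hab; bcase.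
    ring.
  - have -> : sgn ((par d + par x) * (par a + par b + par c)) = sgn ((par d + par x) * par c).
      by apply: sgn_odd; rewrite !oddM !oddD hab; bcase.
    ring.
have G45 : \sum_x sgn ((par e + par x) * (par a + par b + par c + par d)) * X e x * U g A (t6 a b c d x f) +
  \sum_x sgn ((par f + par x) * (par a + par b + par c + par d + par e)) * X f x * U g A (t6 a b c d e x)
  = g a b * g c d * (\sum_x sgn ((par e + par x) * 0) * X e x * A (t2 x f)
      + \sum_x sgn ((par f + par x) * par e) * X f x * A (t2 e x)).
  case: (eqVneq (g a b) 0) => [gz|/gp hab].
    by rewrite gz !mul0r !big1 ?addr0 // => x _; rewrite UE gz !(mul0r, mulr0).
  case: (eqVneq (g c d) 0) => [gz|/gp hcd].
    by rewrite gz mulr0 mul0r !big1 ?addr0 // => x _; rewrite UE gz !(mul0r, mulr0).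
  rewrite mulrDr !big_distrr /=.
  congr (_ + _); apply: eq_bigr => x _; rewrite UE.
  - have -> : sgn ((par e + par x) * (par a + par b + par c + par d)) = sgn ((par e + par x) * 0).
      by apply: sgn_odd; rewrite !oddM !oddD hab hcd; bcase.
    ring.
  - have -> : sgn ((par f + par x) * (par a + par b + par c + par d + par e)) = sgn ((par f + par x) * par e).
      by apply: sgn_odd; rewrite !oddM !oddD hab hcd; bcase.
    ring.
rewrite addrA G01 add0r addrA G23 add0r G45.
done.
Qed.

Definition o0 : 'I_6 := @Ordinal 6 0 isT.
Definition o1 : 'I_6 := @Ordinal 6 1 isT.
Definition o2 : 'I_6 := @Ordinal 6 2 isT.
Definition o3 : 'I_6 := @Ordinal 6 3 isT.
Definition o4 : 'I_6 := @Ordinal 6 4 isT.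
Definition o5 : 'I_6 := @Ordinal 6 5 isT.
Definition mkf (l : seq 'I_6) (i : 'I_6) : 'I_6 := nth o0 l i.
Lemma mkf_inj l l' : (forall i, mkf l' (mkf l i) = i) -> injective (mkf l).
Proof. by move=> H; apply: (can_inj H). Qed.
Lemma inj_tab : injective (mkf [:: o1; o0; o2; o3; o4; o5]).
Proof. by apply: (@mkf_inj _ [:: o1; o0; o2; o3; o4; o5]) => -[[|[|[|[|[|[|//]]]]]] H]; apply: val_inj. Qed.
Definition ptab := perm inj_tab.
Lemma kz_tab (a b c d e f : I) : kz ptab (t6 a b c d e f) = (par b * par a)%N.
Proof. rewrite /kz !big_ord_recl !big_ord0 /Mz !permE /= /tnth /=; ring. Qed.
Lemma pact_tab (T : tensor 6) (a b c d e f : I) :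
  pact ptab T (t6 a b c d e f) = sgn (par b * par a)%N * T (t6 b a c d e f).
Proof.
rewrite ffunE kz_tab; congr (_ * T _).
apply: eq_from_tnth => i; rewrite tnth_mktuple permE; by case: i => [[|[|[|[|[|[|//]]]]]] Hi].
Qed.

Lemma inj_tcd : injective (mkf [:: o0; o1; o3; o2; o4; o5]).
Proof. by apply: (@mkf_inj _ [:: o0; o1; o3; o2; o4; o5]) => -[[|[|[|[|[|[|//]]]]]] H]; apply: val_inj. Qed.
Definition ptcd := perm inj_tcd.
Lemma kz_tcd (a b c d e f : I) : kz ptcd (t6 a b c d e f) = (par d * par c)%N.
Proof. rewrite /kz !big_ord_recl !big_ord0 /Mz !permE /= /tnth /=; ring. Qed.
Lemma pact_tcd (T : tensor 6) (a b c d e f : I) :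
  pact ptcd T (t6 a b c d e f) = sgn (par d * par c)%N * T (t6 a b d c e f).
Proof.
rewrite ffunE kz_tcd; congr (_ * T _).
apply: eq_from_tnth => i; rewrite tnth_mktuple permE; by case: i => [[|[|[|[|[|[|//]]]]]] Hi].
Qed.

Lemma inj_tef : injective (mkf [:: o0; o1; o2; o3; o5; o4]).
Proof. by apply: (@mkf_inj _ [:: o0; o1; o2; o3; o5; o4]) => -[[|[|[|[|[|[|//]]]]]] H]; apply: val_inj. Qed.
Definition ptef := perm inj_tef.
Lemma kz_tef (a b c d e f : I) : kz ptef (t6 a b c d e f) = (par f * par e)%N.
Proof. rewrite /kz !big_ord_recl !big_ord0 /Mz !permE /= /tnth /=; ring. Qed.
Lemma pact_tef (T : tensor 6) (a b c d e f : I) :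
  pact ptef T (t6 a b c d e f) = sgn (par f * par e)%N * T (t6 a b c d f e).
Proof.
rewrite ffunE kz_tef; congr (_ * T _).
apply: eq_from_tnth => i; rewrite tnth_mktuple permE; by case: i => [[|[|[|[|[|[|//]]]]]] Hi].
Qed.

Lemma inj_pP : injective (mkf [:: o2; o3; o0; o1; o4; o5]).
Proof. by apply: (@mkf_inj _ [:: o2; o3; o0; o1; o4; o5]) => -[[|[|[|[|[|[|//]]]]]] H]; apply: val_inj. Qed.
Definition ppP := perm inj_pP.
Lemma kz_pP (a b c d e f : I) : kz ppP (t6 a b c d e f) = (par c * par a + par c * par b + par d * par a + par d * par b)%N.
Proof. rewrite /kz !big_ord_recl !big_ord0 /Mz !permE /= /tnth /=; ring. Qed.
Lemma pact_pP (T : tensor 6) (a b c d e f : I) :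
  pact ppP T (t6 a b c d e f) = sgn (par c * par a + par c * par b + par d * par a + par d * par b)%N * T (t6 c d a b e f).
Proof.
rewrite ffunE kz_pP; congr (_ * T _).
apply: eq_from_tnth => i; rewrite tnth_mktuple permE; by case: i => [[|[|[|[|[|[|//]]]]]] Hi].
Qed.

Lemma inj_s3 : injective (mkf [:: o1; o2; o3; o5; o0; o4]).
Proof. by apply: (@mkf_inj _ [:: o4; o0; o1; o2; o5; o3]) => -[[|[|[|[|[|[|//]]]]]] H]; apply: val_inj. Qed.
Definition ps3 := perm inj_s3.
Lemma kz_s3 (a b c d e f : I) : kz ps3 (t6 a b c d e f) = (par b * par a + par c * par a + par d * par a + par f * par a + par f * par e)%N.
Proof. rewrite /kz !big_ord_recl !big_ord0 /Mz !permE /= /tnth /=; ring. Qed.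
Lemma pact_s3 (T : tensor 6) (a b c d e f : I) :
  pact ps3 T (t6 a b c d e f) = sgn (par b * par a + par c * par a + par d * par a + par f * par a + par f * par e)%N * T (t6 b c d f a e).
Proof.
rewrite ffunE kz_s3; congr (_ * T _).
apply: eq_from_tnth => i; rewrite tnth_mktuple permE; by case: i => [[|[|[|[|[|[|//]]]]]] Hi].
Qed.

Lemma inj_s4 : injective (mkf [:: o2; o4; o3; o5; o0; o1]).
Proof. by apply: (@mkf_inj _ [:: o4; o5; o0; o2; o1; o3]) => -[[|[|[|[|[|[|//]]]]]] H]; apply: val_inj. Qed.
Definition ps4 := perm inj_s4.
Lemma kz_s4 (a b c d e f : I) : kz ps4 (t6 a b c d e f) = (par c * par a + par c * par b + par e * par d + par e * par a + par e * par b + par d * par a + par d * par b + par f * par a + par f * par b)%N.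
Proof. rewrite /kz !big_ord_recl !big_ord0 /Mz !permE /= /tnth /=; ring. Qed.
Lemma pact_s4 (T : tensor 6) (a b c d e f : I) :
  pact ps4 T (t6 a b c d e f) = sgn (par c * par a + par c * par b + par e * par d + par e * par a + par e * par b + par d * par a + par d * par b + par f * par a + par f * par b)%N * T (t6 c e d f a b).
Proof.
rewrite ffunE kz_s4; congr (_ * T _).
apply: eq_from_tnth => i; rewrite tnth_mktuple permE; by case: i => [[|[|[|[|[|[|//]]]]]] Hi].
Qed.


Lemma scr (a : C) (x : (GRing.Field.sort C)^o) : a *: x = a * x.
Proof. by []. Qed.

Definition am k (s : {perm 'I_k}) (T : tensor k) : tensor k := T - pact s T.
Definition fF (g : 'M[C]_(m + 2 * n)) (A : tensor 2) : tensor 6 :=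
  am ppP (am ptab (am ptcd (am ptef (pact ps3 (U g A) + pact ps4 (U g A))))).

Lemma pact_lin k (s : {perm 'I_k}) (a : C) (T S : tensor k) :
  pact s (a *: T + S) = a *: pact s T + pact s S.
Proof. by apply/ffunP => c; rewrite !ffunE !scr; ring. Qed.

Lemma am_lin k (s : {perm 'I_k}) (a : C) (T S : tensor k) :
  am s (a *: T + S) = a *: am s T + am s S.
Proof. by rewrite /am pact_lin scalerBr; apply/ffunP => c; rewrite !ffunE !scr; ring. Qed.

Lemma U_lin g (a : C) (A B : tensor 2) : U g (a *: A + B) = a *: U g A + U g B.
Proof. by apply/ffunP => c; rewrite !ffunE !scr; ring. Qed.

Lemma fF_lin g : linear (fF g).
Proof.
move=> a A B; rewrite /fF U_lin !pact_lin.
have -> : a *: pact ps3 (U g A) + pact ps3 (U g B) + (a *: pact ps4 (U g A) + pact ps4 (U g B))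
  = a *: (pact ps3 (U g A) + pact ps4 (U g A)) + (pact ps3 (U g B) + pact ps4 (U g B)).
  by rewrite scalerDr addrACA.
by rewrite !am_lin.
Qed.

Lemma act_lin k (X : 'M[C]_(m + 2 * n)) (a : C) (T S : tensor k) :
  act X (a *: T + S) = a *: act X T + act X S.
Proof.
apply/ffunP => c; rewrite !ffunE scr big_distrr -big_split /=; apply: eq_bigr => i _.
rewrite big_distrr -big_split /=; apply: eq_bigr => d _; rewrite !ffunE !scr; ring.
Qed.

Lemma actD k (X : 'M[C]_(m + 2 * n)) (T S : tensor k) : act X (T + S) = act X T + act X S.
Proof. by rewrite -[T]scale1r act_lin !scale1r. Qed.

Lemma actN k (X : 'M[C]_(m + 2 * n)) (T : tensor k) : act X (- T) = - act X T.
Proof.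
apply/ffunP => c; rewrite !ffunE -sumrN; apply: eq_bigr => i _.
rewrite -sumrN; apply: eq_bigr => d _; rewrite !ffunE; ring.
Qed.

Lemma act_am k X (s : {perm 'I_k}) (T : tensor k) : act X (am s T) = am s (act X T).
Proof. by rewrite /am actD actN act_pact. Qed.

Lemma act_fF (g X : 'M[C]_(m + 2 * n)) (A : tensor 2) :
  (forall a b : I, par a != par b -> g a b = 0) -> in_osp g X ->
  act X (fF g A) = fF g (act X A).
Proof. by move=> hz ho; rewrite /fF !act_am actD !act_pact act_U. Qed.

Lemma top_add k p (T S : tensor k) :
  tensor_of_parity p T -> tensor_of_parity p S -> tensor_of_parity p (T + S).
Proof.
move=> hT hS c; rewrite ffunE => h.
case: (eqVneq (T c) 0) => [e|/hT //]; apply: hS.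
by apply: contraNneq h => ->; rewrite e addr0.
Qed.

Lemma top_pact k p (s : {perm 'I_k}) (T : tensor k) :
  tensor_of_parity p T -> tensor_of_parity p (pact s T).
Proof.
move=> hT c; rewrite ffunE => h.
have h2 : T (ptup s c) != 0 by apply: contraNneq h => ->; rewrite mulr0.
rewrite -(hT _ h2); congr odd.
rewrite (reindex_inj (@perm_inj _ s)) /=.
by apply: eq_bigr => j _; rewrite tnth_ptup.
Qed.

Lemma top_opp k p (T : tensor k) : tensor_of_parity p T -> tensor_of_parity p (- T).
Proof. by move=> hT c; rewrite ffunE oppr_eq0; apply: hT. Qed.

Lemma top_am k p (s : {perm 'I_k}) (T : tensor k) :
  tensor_of_parity p T -> tensor_of_parity p (am s T).
Proof. by move=> hT; apply: top_add => //; apply/top_opp/top_pact. Qed.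

Lemma top_U p (g : 'M[C]_(m + 2 * n)) (A : tensor 2) :
  (forall a b : I, par a != par b -> g a b = 0) ->
  tensor_of_parity p A -> tensor_of_parity p (U g A).
Proof.
move=> hz hA c; rewrite (tuple6E c).
move: (tnth c 0) (tnth c 1) (tnth c 2) (tnth c 3) (tnth c 4) (tnth c 5) => a b c' d e f.
rewrite UE => h.
have gp : forall x y : I, g x y != 0 -> par x = par y.
  by move=> x y; apply: contraNeq => /hz ->.
have h01 : g a b != 0 by apply: contraNneq h => ->; rewrite !mul0r.
have h23 : g c' d != 0 by apply: contraNneq h => ->; rewrite mulr0 mul0r.
have hA' : A (t2 e f) != 0 by apply: contraNneq h => ->; rewrite mulr0.
have := hA _ hA'; rewrite !big_ord_recl !big_ord0 /tnth /= => <-.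
rewrite !oddD (gp _ _ h01) (gp _ _ h23); by bcase.
Qed.

Lemma top_fF p (g : 'M[C]_(m + 2 * n)) (A : tensor 2) :
  (forall a b : I, par a != par b -> g a b = 0) ->
  tensor_of_parity p A -> tensor_of_parity p (fF g A).
Proof.
move=> hz hA; rewrite /fF; do 4! apply: top_am.
by apply: top_add; apply: top_pact; apply: top_U.
Qed.
End S.

Section S2.
Variables (C : numClosedFieldType) (m n : nat).
Local Notation I := (idx m n).
Local Notation tensor k := (tensor C m n k).
Local Notation sgn := (sgn C).
Lemma amE k (s : {perm 'I_k}) (T : tensor k) c : am s T c = T c - pact s T c.
Proof. by rewrite /am !ffunE. Qed.
Lemma addE k (T S : tensor k) c : (T + S) c = T c + S c.
Proof. by rewrite ffunE. Qed.
Ltac fexp := rewrite /fF; rewrite !(amE, addE, pact_pP, pact_tab, pact_tcd, pact_tef, pact_s3, pact_s4, UE).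

Definition sg (e : nat) : C := if odd e then -1 else 1.
Lemma sgn_sg e : sgn e = sg e.
Proof. by rewrite sgnE /sg; case: (odd e); rewrite ?expr1 ?expr0. Qed.

Lemma fFE (g : 'M[C]_(m + 2 * n)) (A : tensor 2) (a b c d e f : I) :
  fF g A (t6 a b c d e f) = sg (par b * par a + par c * par a + par d * par a + par f * par a + par f * par e) * (g b c * g d f * A (t2 a e)) + sg (par c * par a + par c * par b + par e * par d + par e * par a + par e * par b + par d * par a + par d * par b + par f * par a + par f * par b) * (g c e * g d f * A (t2 a b)) - sg (par f * par e) * (sg (par b * par a + par c * par a + par d * par a + par e * par a + par e * par f) * (g b c * g d e * A (t2 a f)) + sg (par c * par a + par c * par b + par f * par d + par f * par a + par f * par b + par d * par a + par d * par b + par e * par a + par e * par b) * (g c f * g d e * A (t2 a b))) - sg (par d * par c) * (sg (par b * par a + par d * par a + par c * par a + par f * par a + par f * par e) * (g b d * g c f * A (t2 a e)) + sg (par d * par a + par d * par b + par e * par c + par e * par a + par e * par b + par c * par a + par c * par b + par f * par a + par f * par b) * (g d e * g c f * A (t2 a b)) - sg (par f * par e) * (sg (par b * par a + par d * par a + par c * par a + par e * par a + par e * par f) * (g b d * g c e * A (t2 a f)) + sg (par d * par a + par d * par b + par f * par c + par f * par a + par f * par b + par c * par a + par c * par b + par e * par a + par e * par b) * (g d f * g c e * A (t2 a b)))) - sg (par b * par a) * (sg (par a * par b + par c * par b + par d * par b + par f * par b + par f * par e) * (g a c * g d f * A (t2 b e)) + sg (par c * par b + par c * par a + par e * par d + par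 e * par b + par e * par a + par d * par b + par d * par a + par f * par b + par f * par a) * (g c e * g d f * A (t2 b a)) - sg (par f * par e) * (sg (par a * par b + par c * par b + par d * par b + par e * par b + par e * par f) * (g a c * g d e * A (t2 b f)) + sg (par c * par b + par c * par a + par f * par d + par f * par b + par f * par a + par d * par b + par d * par a + par e * par b + par e * par a) * (g c f * g d e * A (t2 b a))) - sg (par d * par c) * (sg (par a * par b + par d * par b + par c * par b + par f * par b + par f * par e) * (g a d * g c f * A (t2 b e)) + sg (par d * par b + par d * par a + par e * par c + par e * par b + par e * par a + par c * par b + par c * par a + par f * par b + par f * par a) * (g d e * g c f * A (t2 b a)) - sg (par f * par e) * (sg (par a * par b + par d * par b + par c * par b + par e * par b + par e * par f) * (g a d * g c e * A (t2 b f)) + sg (par d * par b + par d * par a + par f * par c + par f * par b + par f * par a + par c * par b + par c * par a + par e * par b + par e * par a) * (g d f * g c e * A (t2 b a))))) -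
  sg (par c * par a + par c * par b + par d * par a + par d * par b) * (sg (par d * par c + par a * par c + par b * par c + par f * par c + par f * par e) * (g d a * g b f * A (t2 c e)) + sg (par a * par c + par a * par d + par e * par b + par e * par c + par e * par d + par b * par c + par b * par d + par f * par c + par f * par d) * (g a e * g b f * A (t2 c d)) - sg (par f * par e) * (sg (par d * par c + par a * par c + par b * par c + par e * par c + par e * par f) * (g d a * g b e * A (t2 c f)) + sg (par a * par c + par a * par d + par f * par b + par f * par c + par f * par d + par b * par c + par b * par d + par e * par c + par e * par d) * (g a f * g b e * A (t2 c d))) - sg (par b * par a) * (sg (par d * par c + par b * par c + par a * par c + par f * par c + par f * par e) * (g d b * g a f * A (t2 c e)) + sg (par b * par c + par b * par d + par e * par a + par e * par c + par e * par d + par a * par c + par a * par d + par f * par c + par f * par d) * (g b e * g a f * A (t2 c d)) - sg (par f * par e) * (sg (par d * par c + par b * par c + par a * par c + par e * par c + par e * par f) * (g d b * g a e * A (t2 c f)) + sg (par b * par c + par b * par d + par f * par a + par f * par c + par f * par d + par a * par c + par a * par d + par e * par c + par e * par d) * (g b f * g a e * A (t2 c d)))) - sg (par d * par c) * (sg (par c * par d + par a * par d + par b * par d + par f * par d + par f * par e) * (g c a * g b f * A (t2 d e)) + sg (par a * par d + par a * par c + par e * par b + par e * par d + par e * par c + par b * par d + par b * par c + par f * par d + par f * par c) * (g a e * g b f * A (t2 d c)) - sg (par f * par e) * (sg (par c * par d + par a * par d + par b * par d + par e * par d + par e * par f) * (g c a * g b e * A (t2 d f)) + sg (par a * par d + par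 a * par c + par f * par b + par f * par d + par f * par c + par b * par d + par b * par c + par e * par d + par e * par c) * (g a f * g b e * A (t2 d c))) - sg (par b * par a) * (sg (par c * par d + par b * par d + par a * par d + par f * par d + par f * par e) * (g c b * g a f * A (t2 d e)) + sg (par b * par d + par b * par c + par e * par a + par e * par d + par e * par c + par a * par d + par a * par c + par f * par d + par f * par c) * (g b e * g a f * A (t2 d c)) - sg (par f * par e) * (sg (par c * par d + par b * par d + par a * par d + par e * par d + par e * par f) * (g c b * g a e * A (t2 d f)) + sg (par b * par d + par b * par c + par f * par a + par f * par d + par f * par c + par a * par d + par a * par c + par e * par d + par e * par c) * (g b f * g a e * A (t2 d c)))))).
Proof. fexp. rewrite !sgn_sg. reflexivity. Qed.

Lemma w_ab (g : 'M[C]_(m + 2 * n)) (A : tensor 2)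
  (hz : forall a b : I, par a != par b -> g a b = 0)
  (hg : forall a b : I, g b a = sgn (par a * par b) * g a b)
  (hA : forall a b : I, A (t2 a b) = - sgn (par a * par b) * A (t2 b a))
  (a b c d e f : I) :
  fF g A (t6 a b c d e f) = - sgn (par a * par b) * fF g A (t6 b a c d e f).
Proof.
have gm : forall x y : I, g x y = (if (m <= x)%N == (m <= y)%N then 1 else 0) * g x y.
  move=> x y; case: eqP => [_|ne]; first by rewrite mul1r.
  by rewrite mul0r hz // /par; move: ne; case: (m <= x)%N; case: (m <= y)%N.
have hA' : forall x y : I, A (t2 x y) = - sg (par x * par y) * A (t2 y x) by move=> x y; rewrite -sgn_sg.
have hg' : forall x y : I, g y x = sg (par x * par y) * g x y by move=> x y; rewrite -sgn_sg.
rewrite sgn_sg !fFE.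
rewrite ?(hA' b a) ?(hA' c a) ?(hA' d a) ?(hA' e a) ?(hA' f a) ?(hA' c b) ?(hA' d b) ?(hA' e b) ?(hA' f b) ?(hA' d c) ?(hA' e c) ?(hA' f c) ?(hA' e d) ?(hA' f d) ?(hA' f e) ?(hg' a b) ?(hg' a c) ?(hg' a d) ?(hg' a e) ?(hg' a f) ?(hg' b c) ?(hg' b d) ?(hg' b e) ?(hg' b f) ?(hg' c d) ?(hg' c e) ?(hg' c f) ?(hg' d e) ?(hg' d f) ?(hg' e f). (try rewrite [g a b]gm; try rewrite [g a c]gm; try rewrite [g a d]gm; try rewrite [g a e]gm; try rewrite [g a f]gm; try rewrite [g b c]gm; try rewrite [g b d]gm; try rewrite [g b e]gm; try rewrite [g b f]gm; try rewrite [g c d]gm; try rewrite [g c e]gm; try rewrite [g c f]gm; try rewrite [g d e]gm; try rewrite [g d f]gm; try rewrite [g e f]gm). rewrite /sg /par /addn /muln. (case: (m <= a)%N; case: (m <= b)%N; case: (m <= c)%N; case: (m <= d)%N; case: (m <= e)%N; case: (m <= f)%N; idtac). all: rewrite /=. all: ring.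
Qed.

Lemma w_cd (g : 'M[C]_(m + 2 * n)) (A : tensor 2)
  (hz : forall a b : I, par a != par b -> g a b = 0)
  (hg : forall a b : I, g b a = sgn (par a * par b) * g a b)
  (hA : forall a b : I, A (t2 a b) = - sgn (par a * par b) * A (t2 b a))
  (a b c d e f : I) :
  fF g A (t6 a b c d e f) = - sgn (par c * par d) * fF g A (t6 a b d c e f).
Proof.
have gm : forall x y : I, g x y = (if (m <= x)%N == (m <= y)%N then 1 else 0) * g x y.
  move=> x y; case: eqP => [_|ne]; first by rewrite mul1r.
  by rewrite mul0r hz // /par; move: ne; case: (m <= x)%N; case: (m <= y)%N.
have hA' : forall x y : I, A (t2 x y) = - sg (par x * par y) * A (t2 y x) by move=> x y; rewrite -sgn_sg.
have hg' : forall x y : I, g y x = sg (par x * par y) * g x y by move=> x y; rewrite -sgn_sg.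
rewrite sgn_sg !fFE.
rewrite ?(hA' b a) ?(hA' c a) ?(hA' d a) ?(hA' e a) ?(hA' f a) ?(hA' c b) ?(hA' d b) ?(hA' e b) ?(hA' f b) ?(hA' d c) ?(hA' e c) ?(hA' f c) ?(hA' e d) ?(hA' f d) ?(hA' f e) ?(hg' a b) ?(hg' a c) ?(hg' a d) ?(hg' a e) ?(hg' a f) ?(hg' b c) ?(hg' b d) ?(hg' b e) ?(hg' b f) ?(hg' c d) ?(hg' c e) ?(hg' c f) ?(hg' d e) ?(hg' d f) ?(hg' e f). (try rewrite [g a b]gm; try rewrite [g a c]gm; try rewrite [g a d]gm; try rewrite [g a e]gm; try rewrite [g a f]gm; try rewrite [g b c]gm; try rewrite [g b d]gm; try rewrite [g b e]gm; try rewrite [g b f]gm; try rewrite [g c d]gm; try rewrite [g c e]gm; try rewrite [g c f]gm; try rewrite [g d e]gm; try rewrite [g d f]gm; try rewrite [g e f]gm). rewrite /sg /par /addn /muln. (case: (m <= a)%N; case: (m <= b)%N; case: (m <= c)%N; case: (m <= d)%N; case: (m <= e)%N; case: (m <= f)%N; idtac). all: rewrite /=. all: ring.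
Qed.

Lemma w_ef (g : 'M[C]_(m + 2 * n)) (A : tensor 2)
  (hz : forall a b : I, par a != par b -> g a b = 0)
  (hg : forall a b : I, g b a = sgn (par a * par b) * g a b)
  (hA : forall a b : I, A (t2 a b) = - sgn (par a * par b) * A (t2 b a))
  (a b c d e f : I) :
  fF g A (t6 a b c d e f) = - sgn (par e * par f) * fF g A (t6 a b c d f e).
Proof.
have gm : forall x y : I, g x y = (if (m <= x)%N == (m <= y)%N then 1 else 0) * g x y.
  move=> x y; case: eqP => [_|ne]; first by rewrite mul1r.
  by rewrite mul0r hz // /par; move: ne; case: (m <= x)%N; case: (m <= y)%N.
have hA' : forall x y : I, A (t2 x y) = - sg (par x * par y) * A (t2 y x) by move=> x y; rewrite -sgn_sg.
have hg' : forall x y : I, g y x = sg (par x * par y) * g x y by move=> x y; rewrite -sgn_sg.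
rewrite sgn_sg !fFE.
rewrite ?(hA' b a) ?(hA' c a) ?(hA' d a) ?(hA' e a) ?(hA' f a) ?(hA' c b) ?(hA' d b) ?(hA' e b) ?(hA' f b) ?(hA' d c) ?(hA' e c) ?(hA' f c) ?(hA' e d) ?(hA' f d) ?(hA' f e) ?(hg' a b) ?(hg' a c) ?(hg' a d) ?(hg' a e) ?(hg' a f) ?(hg' b c) ?(hg' b d) ?(hg' b e) ?(hg' b f) ?(hg' c d) ?(hg' c e) ?(hg' c f) ?(hg' d e) ?(hg' d f) ?(hg' e f). (try rewrite [g a b]gm; try rewrite [g a c]gm; try rewrite [g a d]gm; try rewrite [g a e]gm; try rewrite [g a f]gm; try rewrite [g b c]gm; try rewrite [g b d]gm; try rewrite [g b e]gm; try rewrite [g b f]gm; try rewrite [g c d]gm; try rewrite [g c e]gm; try rewrite [g c f]gm; try rewrite [g d e]gm; try rewrite [g d f]gm; try rewrite [g e f]gm). rewrite /sg /par /addn /muln. (case: (m <= a)%N; case: (m <= b)%N; case: (m <= c)%N; case: (m <= d)%N; case: (m <= e)%N; case: (m <= f)%N; idtac). all: rewrite /=. all: ring.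
Qed.

Lemma w_P (g : 'M[C]_(m + 2 * n)) (A : tensor 2)
  (hz : forall a b : I, par a != par b -> g a b = 0)
  (hg : forall a b : I, g b a = sgn (par a * par b) * g a b)
  (hA : forall a b : I, A (t2 a b) = - sgn (par a * par b) * A (t2 b a))
  (a b c d e f : I) :
  fF g A (t6 a b c d e f) = - sgn ((par a + par b) * (par c + par d)) * fF g A (t6 c d a b e f).
Proof.
have gm : forall x y : I, g x y = (if (m <= x)%N == (m <= y)%N then 1 else 0) * g x y.
  move=> x y; case: eqP => [_|ne]; first by rewrite mul1r.
  by rewrite mul0r hz // /par; move: ne; case: (m <= x)%N; case: (m <= y)%N.
have hA' : forall x y : I, A (t2 x y) = - sg (par x * par y) * A (t2 y x) by move=> x y; rewrite -sgn_sg.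
have hg' : forall x y : I, g y x = sg (par x * par y) * g x y by move=> x y; rewrite -sgn_sg.
rewrite sgn_sg !fFE.
rewrite ?(hA' b a) ?(hA' c a) ?(hA' d a) ?(hA' e a) ?(hA' f a) ?(hA' c b) ?(hA' d b) ?(hA' e b) ?(hA' f b) ?(hA' d c) ?(hA' e c) ?(hA' f c) ?(hA' e d) ?(hA' f d) ?(hA' f e) ?(hg' a b) ?(hg' a c) ?(hg' a d) ?(hg' a e) ?(hg' a f) ?(hg' b c) ?(hg' b d) ?(hg' b e) ?(hg' b f) ?(hg' c d) ?(hg' c e) ?(hg' c f) ?(hg' d e) ?(hg' d f) ?(hg' e f). (try rewrite [g a b]gm; try rewrite [g a c]gm; try rewrite [g a d]gm; try rewrite [g a e]gm; try rewrite [g a f]gm; try rewrite [g b c]gm; try rewrite [g b d]gm; try rewrite [g b e]gm; try rewrite [g b f]gm; try rewrite [g c d]gm; try rewrite [g c e]gm; try rewrite [g c f]gm; try rewrite [g d e]gm; try rewrite [g d f]gm; try rewrite [g e f]gm). rewrite /sg /par /addn /muln. (case: (m <= a)%N; case: (m <= b)%N; case: (m <= c)%N; case: (m <= d)%N; case: (m <= e)%N; case: (m <= f)%N; idtac). all: rewrite /=. all: ring.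
Qed.

Lemma phi0 (g : 'M[C]_(m + 2 * n)) (A : tensor 2)
  (hz : forall a b : I, par a != par b -> g a b = 0)
  (hg : forall a b : I, g b a = sgn (par a * par b) * g a b)
  (hA : forall a b : I, A (t2 a b) = - sgn (par a * par b) * A (t2 b a))
  (a b c d e f : I) :
  q_op (s_op (fun x y z w => fF g A (t6 a b x y z w))) c d e f = 0.
Proof.
have gm : forall x y : I, g x y = (if (m <= x)%N == (m <= y)%N then 1 else 0) * g x y.
  move=> x y; case: eqP => [_|ne]; first by rewrite mul1r.
  by rewrite mul0r hz // /par; move: ne; case: (m <= x)%N; case: (m <= y)%N.
have hA' : forall x y : I, A (t2 x y) = - sg (par x * par y) * A (t2 y x) by move=> x y; rewrite -sgn_sg.
have hg' : forall x y : I, g y x = sg (par x * par y) * g x y by move=> x y; rewrite -sgn_sg.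
rewrite /q_op /s_op /= !sgn_sg.
rewrite !fFE.
rewrite ?(hA' b a) ?(hA' c a) ?(hA' d a) ?(hA' e a) ?(hA' f a) ?(hA' c b) ?(hA' d b) ?(hA' e b) ?(hA' f b) ?(hA' d c) ?(hA' e c) ?(hA' f c) ?(hA' e d) ?(hA' f d) ?(hA' f e) ?(hg' a b) ?(hg' a c) ?(hg' a d) ?(hg' a e) ?(hg' a f) ?(hg' b c) ?(hg' b d) ?(hg' b e) ?(hg' b f) ?(hg' c d) ?(hg' c e) ?(hg' c f) ?(hg' d e) ?(hg' d f) ?(hg' e f). (try rewrite [g a b]gm; try rewrite [g a c]gm; try rewrite [g a d]gm; try rewrite [g a e]gm; try rewrite [g a f]gm; try rewrite [g b c]gm; try rewrite [g b d]gm; try rewrite [g b e]gm; try rewrite [g b f]gm; try rewrite [g c d]gm; try rewrite [g c e]gm; try rewrite [g c f]gm; try rewrite [g d e]gm; try rewrite [g d f]gm; try rewrite [g e f]gm). rewrite /sg /par /addn /muln. (case: (m <= a)%N; case: (m <= b)%N; case: (m <= c)%N; case: (m <= d)%N; case: (m <= e)%N; case: (m <= f)%N; idtac). all: rewrite /=. all: ring.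
Qed.

End S2.

Section S3.
Variables (C : numClosedFieldType) (m n : nat).
Local Notation I := (idx m n).
Local Notation tensor k := (tensor C m n k).
Local Notation sgn := (sgn C).

Lemma fF_nz (g : 'M[C]_(m + 2 * n)) (hm : (4 < m)%N) (hn : (1 < n)%N) (hg : ortho_metric g) :
  exists A : tensor 2, in_g A /\ fF g A != 0.
Proof.
case: hg => hz hg hgg.
have gp : forall x y : I, g x y != 0 -> par x = par y.
  by move=> x y; apply: contraNeq => /hz ->.
have H0 : (0 < m + 2 * n)%N by lia.
have H1 : (1 < m + 2 * n)%N by lia.
have He : (m < m + 2 * n)%N by lia.
pose i0 : I := Ordinal H0.
pose j0 : I := Ordinal H1.
pose e0 : I := Ordinal He.
have pi0 : par i0 = 0%N by rewrite /par /=; case: leqP => //; lia.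
have pj0 : par j0 = 0%N by rewrite /par /=; case: leqP => //; lia.
have pe0 : par e0 = 1%N by rewrite /par /= leqnn.
have ij : (i0 == j0) = false by [].
have ji : (j0 == i0) = false by [].
have [x hx] : exists x, g x e0 != 0.
  case: (pickP (fun x => g x e0 != 0)) => [x hx|h0]; first by exists x.
  have := congr1 (fun M : 'M[C]_(m + 2 * n) => M e0 e0) hgg.
  rewrite !mxE eqxx /= big1 => [|y _]; first by move/eqP; rewrite eq_sym oner_eq0.
  by rewrite mxE; move: (h0 y) => /negbFE/eqP ->; rewrite mulr0.
have px : par x = 1%N by rewrite (gp _ _ hx).
have neq : forall y z : I, par y != par z -> (y == z) = false.
  by move=> y z; apply: contraNF => /eqP ->.
have xi : (x == i0) = false by apply: neq; rewrite px pi0.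
have xj : (x == j0) = false by apply: neq; rewrite px pj0.
have ei : (e0 == i0) = false by apply: neq; rewrite pe0 pi0.
have ej : (e0 == j0) = false by apply: neq; rewrite pe0 pj0.
pose A0 : tensor 2 := [ffun t => if (tnth t 0 == i0) && (tnth t 1 == j0) then 1
   else if (tnth t 0 == j0) && (tnth t 1 == i0) then -1 else 0].
have A0E : forall y z, A0 (t2 y z) = if (y == i0) && (z == j0) then 1
   else if (y == j0) && (z == i0) then -1 else 0 by move=> y z; rewrite ffunE.
exists A0; split.
  move=> a b; rewrite !A0E.
  case: (eqVneq a i0) => [->|na].
    case: (eqVneq b j0) => [->|nb].
      by rewrite ?ij ?ji /= pi0 pj0 /sgn expr0; ring.
    by rewrite ?ij ?ji ?(negbTE nb) /= ?andbF; ring.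
  case: (eqVneq a j0) => [->|na'].
    case: (eqVneq b i0) => [->|nb].
      by rewrite ?ij ?ji /= pi0 pj0 /sgn expr0; ring.
    by rewrite ?ij ?ji ?(negbTE nb) /= ?andbF; ring.
  by rewrite ?(negbTE na) ?(negbTE na') /= ?andbF; ring.
apply/eqP => H.
have := congr1 (fun T : tensor 6 => T (t6 i0 j0 x x e0 e0)) H.
rewrite fFE !A0E !eqxx xi xj ei ej ij ji /= ?andbF /=.
rewrite ?(hz i0 x) ?(hz x i0) ?(hz j0 x) ?(hz x j0) ?(hz i0 e0) ?(hz e0 i0) ?(hz j0 e0) ?(hz e0 j0) ?pi0 ?pj0 ?px ?pe0 //.
rewrite /sg /addn /muln /= ffunE => H'.
have : (-8 : C) * (g x e0 * g x e0) = 0 by rewrite -H'; ring.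
apply/eqP; rewrite mulf_eq0 negb_or mulf_neq0 // andbT oppr_eq0.
by rewrite pnatr_eq0.
Qed.
End S3.

Theorem lemma6p1 (C : numClosedFieldType) (m n : nat) (hm : (4 < m)%N) (hn : (1 < n)%N)
    (g : 'M[C]_(m + 2 * n)) (hg : ortho_metric g) :
  exists f : {linear tensor C m n 2 -> tensor C m n 6},
    is_g_hom_into_ker_Phi g f /\ exists A, in_g A /\ f A != 0.
Proof.
pose f : {linear tensor C m n 2 -> tensor C m n 6} :=
  HB.pack (fF g) (GRing.isLinear.Build _ _ _ _ (fF g) (fF_lin g)).
exists f.
have [A [hA nz]] := fF_nz hm hn hg.
case: hg => hz hgs _.
split; last by exists A.
split.
- move=> B hB; split.
    split; move=> a b c d e f'.
    + exact: w_ab.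
    + exact: w_cd.
    + exact: w_ef.
    + exact: w_P.
  apply/ffunP => c; rewrite (tuple6E c).
  move: (tnth c 0) (tnth c 1) (tnth c 2) (tnth c 3) (tnth c 4) (tnth c 5) => a b c' d e f'.
  rewrite !ffunE; exact: phi0.
- move=> B p _ hp; exact: top_fF.
- move=> X B hX _; rewrite /=; by rewrite act_fF.
Qed.
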